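(* Let $G=(V,E)$ be a finite graph with positive edge weight function $m$. Suppose there is a constant $0\le\beta<1$ such that for every $v\in V$, $m(v)\ge\left(\max_{e'\in E}m(e')\right)(1-\beta)|V|$. Then $h_G\ge1-2\beta$, i.e., $G$ is a $2\beta$-expander.
   Context: For a finite graph $G=(V,E)$ with positive edge weights $m:E\to\mathbb{R}_{>0}$, set $m(v)=\sum_{e\in E,\ v\in e}m(e)$, $m(U)=\sum_{v\in U}m(v)$, and $m(U_1,U_2)=\sum_{(u_1,u_2)\in U_1\times U_2,\ \{u_1,u_2\}\in E}m(\{u_1,u_2\})$. The (generalized) Cheeger constant is $h_G=\min_{\emptyset\neq U\subsetneq V}\frac{m(U,V\setminus U)\,m(V)}{m(U)\,m(V\setminus U)}$. $G$ is a $\lambda$-expander if $1-h_G\le\lambda$. *)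

(* Defs.v *)
From mathcomp Require Import all_boot all_order all_algebra.
Set Implicit Arguments. Unset Strict Implicit. Unset Printing Implicit Defensive.
Import Order.TTheory GRing.Theory Num.Theory.
Local Open Scope ring_scope.

(* A finite (simple) graph on the finite vertex type V: its edge set E is a set
   of 2-element subsets of V; m : {set V} -> R is the edge weight (only its
   values on E matter). *)
Section Graph.
Variables (R : realFieldType) (V : finType) (E : {set {set V}}) (m : {set V} -> R).

Definition is_simple_graph : Prop := forall e, e \in E -> #|e| = 2%N.
Definition pos_weights : Prop := forall e, e \in E -> 0 < m e.

Definition vweight (v : V) : R := \sum_(e in E | v \in e) m e.
Definition sweight (U : {set V}) : R := \sum_(v in U) vweight v.
Definition cutweight (U1 U2 : {set V}) : R :=
  \sum_(u1 in U1) \sum_(u2 in U2 | [set u1; u2] \in E) m [set u1; u2].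

Definition cheeger_ratio (U : {set V}) : R :=
  cutweight U (~: U) * sweight setT / (sweight U * sweight (~: U)).

Definition proper_nonempty (U : {set V}) : bool := (U != set0) && (U != setT).

(* h_G = min over nonempty proper subsets U of the ratio (0 if there is no
   such U, a case excluded by the hypotheses of the theorem). *)
Definition cheeger : R :=
  match [pick U | proper_nonempty U] with
  | Some U0 => \big[Num.min/cheeger_ratio U0]_(U | proper_nonempty U) cheeger_ratio U
  | None => 0
  end.

Definition expander (lambda : R) : Prop := 1 - cheeger <= lambda.

(* max_{e in E} m(e) (E nonempty and weights positive in the theorem) *)
Definition max_edge_weight : R := \big[Num.max/0]_(e in E) m e.

End Graph.

(* Main.v *)
Require Import Defs.
From mathcomp Require Import all_boot all_order all_algebra.
From mathcomp Require Import ring lra.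
Set Implicit Arguments. Unset Strict Implicit.
Import Order.TTheory GRing.Theory Num.Theory.
Local Open Scope ring_scope.

Definition fw (R : realFieldType) (V : finType) (E : {set {set V}})
  (m : {set V} -> R) (u w : V) : R :=
  if [set u; w] \in E then m [set u; w] else 0.

Lemma edge_eq (V : finType) (E : {set {set V}}) (e : {set V}) (u w : V) :
  is_simple_graph E -> e \in E -> u \in e -> w \in e -> w != u ->
  e = [set u; w].
Proof.
move=> hs eE ue we wu; apply/eqP; rewrite eq_sym eqEcard.
apply/andP; split.
  by apply/subsetP => z; rewrite !inE => /orP[]/eqP->.
by rewrite (hs _ eE) cards2 eq_sym wu.
Qed.

Lemma vweight_eq (R : realFieldType) (V : finType) (E : {set {set V}})
  (m : {set V} -> R) (u : V) :
  is_simple_graph E ->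
  vweight E m u = \sum_(w | w != u) fw E m u w.
Proof.
move=> hs; rewrite /vweight.
transitivity (\sum_(e in E | u \in e) \sum_(w | (w != u) && (w \in e)) m e).
  apply eq_bigr => e /andP[eE ue].
  have : #|e :\ u| == 1%N.
    by move: (cardsD1 u e); rewrite ue (hs _ eE) add1n => -[<-].
  case/cards1P => w Hw.
  rewrite (eq_bigl (pred1 w)) ?big_pred1_eq // => z.
  by rewrite /= -(in_set1 z w) -Hw in_setD1.
rewrite (exchange_big_dep (fun w => w != u)); last by move=> e w _ /andP[].
apply eq_bigr => w wu; rewrite /fw.
case: ifP => hE.
  rewrite (eq_bigl (pred1 [set u; w])) ?big_pred1_eq // => e /=.
  apply/idP/idP.
    case/andP=> /andP[eE ue] /andP[_ we].
    by rewrite (edge_eq hs eE ue we wu).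
  move/eqP => ->; rewrite hE wu !inE !eqxx orbT //.
rewrite big_pred0 // => e /=; apply/negP => /andP[/andP[eE ue] /andP[_ we]].
by move: hE; rewrite -(edge_eq hs eE ue we wu) eE.
Qed.

Lemma le_maxw (R : realFieldType) (V : finType) (E : {set {set V}})
  (m : {set V} -> R) e : e \in E -> m e <= max_edge_weight E m.
Proof. by move=> eE; rewrite /max_edge_weight (bigD1 e) //= le_max lexx. Qed.

Lemma sweight_le (R : realFieldType) (V : finType) (E : {set {set V}})
  (m : {set V} -> R) (M : R) (U : {set V}) :
  is_simple_graph E ->
  (forall u w, 0 <= fw E m u w <= M) ->
  sweight E m U <= cutweight E m U (~: U) + #|U|%:R * #|U|%:R * M.
Proof.
move=> hs hb; rewrite /sweight /cutweight.
have -> : #|U|%:R * #|U|%:R * M = \sum_(u in U) (#|U|%:R * M).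
  by rewrite sumr_const -(mulr_natr (_ * M)); ring.
apply: (@le_trans _ _ (\sum_(u in U) (\sum_(u2 in ~: U | [set u; u2] \in E) m [set u; u2] + #|U|%:R * M))); last by rewrite big_split.
apply: ler_sum; move=> u uU.
rewrite vweight_eq //.
apply: (@le_trans _ _ (\sum_w fw E m u w)).
  rewrite [X in _ <= X](bigID (fun w => w != u)) /= lerDl.
  by apply: sumr_ge0 => w _; case/andP: (hb u w).
rewrite (bigID (fun w => w \in U)) /= addrC lerD //.
  rewrite big_mkcondr /= [X in _ <= X](eq_bigl (fun w => w \notin U)); last first.
    by move=> w; rewrite /= in_setC.
  by apply: ler_sum => w _; rewrite /fw.
apply: (@le_trans _ _ (\sum_(w in U) M)).
  by apply: ler_sum => w _; case/andP: (hb u w).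
by rewrite sumr_const mulr_natl.
Qed.
Lemma alg (R: realFieldType) (a b c M beta k q : R): 0<M -> 0<=beta -> beta<1 -> 1<=k -> 1<=q -> 0<=c -> a <= c + k*k*M -> b <= c + q*q*M -> M*(1-beta)*(k+q)*k <= a -> M*(1-beta)*(k+q)*q <= b -> 1 - 2*beta <= c*(a+b)/(a*b).
Proof.
move=> hM hb0 hb1 hk hl hc ha hb ha' hb'.
set D := (1-beta)*(k+q).
have hD : 0 < D by rewrite /D; nra.
have hMD : 0 < M*D by apply: mulr_gt0.
have hA : M*D*k <= a by rewrite /D !mulrA.
have hB : M*D*q <= b by rewrite /D !mulrA.
have ha0 : 0 < a by apply: lt_le_trans hA; apply: mulr_gt0 => //; lra.
have hb0' : 0 < b by apply: lt_le_trans hB; apply: mulr_gt0 => //; lra.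
have h1 : a*(D-k) <= c*D.
  have : k*k*M*D <= a*k by nra.
  nra.
have h2 : b*(D-q) <= c*D.
  have : q*q*M*D <= b*q by nra.
  nra.
rewrite ler_pdivlMr; last by nra.
have h3 : (a*b)*(k+q)*(1-2*beta) <= c*(a+b)*D.
  have : b*a*(D-k) <= b*(c*D) by nra.
  have : a*b*(D-q) <= a*(c*D) by nra.
  rewrite /D; nra.
case: (lerP 0 (1 - 2*beta)) => hs.
  have hkq : 0 < k + q by lra.
  rewrite -(ler_pM2l hkq).
  have hY : 0 <= c*(a+b) by apply: mulr_ge0 => //; lra.
  apply: (le_trans (_ : _ <= c*(a+b)*D)); first by have -> : (k+q)*((1-2*beta)*(a*b)) = a*b*(k+q)*(1-2*beta) by ring.
  have : 0 <= c*(a+b)*(k+q)*beta by apply: mulr_ge0 => //; apply: mulr_ge0 => //; lra.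
  rewrite /D; nra.
have hab : 0 < a*b by apply: mulr_gt0.
have hY : 0 <= c*(a+b) by apply: mulr_ge0 => //; lra.
nra.
Qed.

Lemma cut_sym (R : realFieldType) (V : finType) (E : {set {set V}})
  (m : {set V} -> R) (A B : {set V}) :
  cutweight E m A B = cutweight E m B A.
Proof.
rewrite /cutweight; under eq_bigr do rewrite big_mkcondr.
rewrite exchange_big; apply: eq_bigr => b _; rewrite big_mkcondr.
by apply: eq_bigr => a _; rewrite setUC.
Qed.

Theorem lemma4p5 (R : realFieldType) (V : finType) (E : {set {set V}})
    (m : {set V} -> R) (beta : R) :
  is_simple_graph E -> E != set0 -> pos_weights E m ->
  0 <= beta -> beta < 1 ->
  (forall v : V, vweight E m v >= max_edge_weight E m * (1 - beta) * #|V|%:R) ->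
  cheeger E m >= 1 - 2 * beta /\ expander E m (2 * beta).
Proof.
move=> hs hE hpos hb0 hb1 hv.
have [e0 e0E] := set0Pn _ hE.
set M := max_edge_weight E m.
have hM : 0 < M := lt_le_trans (hpos _ e0E) (le_maxw m e0E).
have hfw : forall u w, 0 <= fw E m u w <= M.
  move=> u w; rewrite /fw; case: ifP => h.
    by rewrite (ltW (hpos _ h)) (le_maxw m h).
  by rewrite lexx ltW.
have key : forall U, proper_nonempty U -> 1 - 2 * beta <= cheeger_ratio E m U.
  move=> U /andP[U0 UT]; rewrite /cheeger_ratio.
  have sT : sweight E m setT = sweight E m U + sweight E m (~: U).
    rewrite /sweight (bigID (fun v => v \in U)) /=.
    by congr (_ + _); apply: eq_bigl => v; rewrite !inE.
  have UC0 : ~: U != set0.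
    by apply: contra UT => /eqP h; rewrite -(setCK U) h setC0.
  have hk : 1 <= #|U|%:R :> R by rewrite ler1n card_gt0.
  have hq : 1 <= #|~: U|%:R :> R by rewrite ler1n card_gt0.
  have hn : #|V|%:R = #|U|%:R + #|~: U|%:R :> R by rewrite -natrD cardsC.
  have lb : forall W : {set V}, M * (1 - beta) * (#|U|%:R + #|~: U|%:R) * #|W|%:R <= sweight E m W.
    move=> W; rewrite -hn /sweight.
    apply: (@le_trans _ _ (\sum_(v in W) (M * (1 - beta) * #|V|%:R))).
      by rewrite sumr_const mulr_natr.
    by apply: ler_sum => v _; apply: hv.
  rewrite sT; apply: (@alg R _ _ _ M beta #|U|%:R #|~: U|%:R) => //.
  - by apply: sumr_ge0 => u _; apply: sumr_ge0 => w /andP[_ h]; exact: ltW (hpos _ h).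
  - have h := sweight_le U hs hfw. apply: le_trans h _. exact: lexx.
  - have h := sweight_le (~: U) hs hfw; rewrite setCK in h.
    by apply: le_trans h _; rewrite cut_sym.
have hc : 1 - 2 * beta <= cheeger E m.
  rewrite /cheeger; case: pickP => [U0 hU0 | hnone].
    apply: (big_ind (fun x => 1 - 2 * beta <= x)); first exact: key.
      by move=> x y hx hy; rewrite le_min hx hy.
    exact: key.
  exfalso.
  have : e0 != set0 by rewrite -card_gt0 (hs _ e0E).
  case/set0Pn => x xe.
  move: (hnone [set x]); rewrite /proper_nonempty.
  have -> : [set x] != set0 by apply/set0Pn; exists x; rewrite inE.
  have -> // : [set x] != setT.
  apply/negP => /eqP h.
  have : (#|e0| <= #|[set x]|)%N by rewrite h subset_leq_card // subsetT.
  by rewrite cards1 (hs _ e0E).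
split => //.
by rewrite /expander; lra.
Qed.
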